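(* Let $M=\begin{pmatrix}\alpha&\beta\\ \beta&\gamma\end{pmatrix}\in\mathbb{Z}^{2\times2}$ be positive definite with $\det M$ a perfect square, and $Q(x)=x^TMx$. The following are equivalent: (1) $\alpha$ is a sum of two squares; (2) $Q(x)$ is a sum of two squares for all $x\in\mathbb{Z}^2$; (3) $Q(x)$ is a sum of two squares for some $x\in\mathbb{Z}^2\setminus\{0\}$. If these fail, then there is a prime $q\equiv3\pmod 4$ such that for every $x\in\mathbb{Z}^2\setminus\{0\}$ the exponent of $q$ in $Q(x)$ is odd. *)

(* Defs.v *)
From mathcomp Require Import all_boot all_order all_algebra.
Set Implicit Arguments. Unset Strict Implicit. Unset Printing Implicit Defensive.
Import Order.TTheory GRing.Theory Num.Theory.
Local Open Scope ring_scope.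

Definition qform (a b c : int) (x1 x2 : int) : int :=
  a * x1 ^+ 2 + 2%:R * b * x1 * x2 + c * x2 ^+ 2.

Definition sum2sq (n : int) : Prop := exists u v : int, n = u ^+ 2 + v ^+ 2.

(* M = [[a,b],[b,c]] is positive definite : Q(x) > 0 for all nonzero x in Z^2 (equivalent over R by homogeneity/density for rational M). *)
Definition posdef2 (a b c : int) : Prop :=
  forall x1 x2 : int, (x1, x2) != (0, 0) -> 0 < qform a b c x1 x2.

(* Main.v *)
Require Import Defs.
From mathcomp Require Import all_boot all_order all_algebra all_field.
From mathcomp Require Import zify ring lra.
From Stdlib Require Import Classical.
Import Order.TTheory GRing.Theory Num.Theory.

Definition s2 (n : nat) := exists U V : nat, n = U^2 + V^2.

Lemma s2M m n : s2 m -> s2 n -> s2 (m * n).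
Proof.
move=> [U [V ->]] [R [T ->]].
case: (leqP (V*R) (U*T)) => h.
  exists (U*R + V*T), (U*T - V*R); nia.
exists (U*R + V*T), (V*R - U*T); nia.
Qed.

Lemma sqrt_ex n : exists s, s ^ 2 <= n < s.+1 ^ 2.
Proof.
elim: n => [|n [s /andP [h1 h2]]]; first by exists 0.
case: (ltnP n.+1 (s.+1 ^ 2)) => h.
  by exists s; rewrite h andbT; apply: leq_trans h1 _.
exists s.+1; apply/andP; split => //.
have e : n.+1 = s.+1 ^ 2 by apply/eqP; rewrite eqn_leq h andbT.
rewrite e !expnS !expn0 !muln1; nia.
Qed.

Section R.
Local Open Scope ring_scope.
Lemma key3 q (U V : nat) : prime q -> (q %% 4 = 3)%N -> (q %| U^2 + V^2)%N -> (q %| U)%N.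
Proof.
move=> pq q3 hd.
have chq := pchar_Fp pq.
rewrite (dvdn_pcharf chq) in hd *.
apply/negPn/negP => hU.
have hu : U%:R != 0 :> 'F_q by rewrite -(dvdn_pcharf chq).
set u : 'F_q := U%:R in hu.
set v : 'F_q := V%:R.
have e : u ^+ 2 + v ^+ 2 = 0 by move/eqP: hd; rewrite natrD !natrX.
set w := v / u.
have w2 : w ^+ 2 = -1.
  rewrite /w expr_div_n.
  have -> : v ^+ 2 = - u ^+ 2 by rewrite -(subr0 (v^+2)) -e; ring.
  by rewrite mulNr divff // expf_neq0.
have w0 : w != 0.
  apply/negP => /eqP w0; move: w2; rewrite w0 expr0n /= => /eqP.
  by rewrite eq_sym oppr_eq0 oner_eq0.
have wq := expf_card w; rewrite card_Fp // in wq.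
have qe : q = (2 * (2 * (q %/ 4)).+1).+1%N by rewrite {1}(divn_eq q 4) q3; lia.
have : w ^+ (2 * (2 * (q %/ 4)).+1).+1 = - w.
  by rewrite exprS exprM w2 exprS exprM sqrrN !expr1n mulr1 mulrN1.
rewrite -qe wq => /eqP; rewrite -subr_eq0 opprK -mulr2n -mulr_natr mulf_eq0 (negPf w0) /=.
rewrite -(dvdn_pcharf chq) => /dvdn_leq; lia.
Qed.

Lemma sqrtm1 p : prime p -> (p %% 4 = 1)%N -> exists W : 'F_p, W ^+ 2 = -1.
Proof.
move=> pp p1.
have hp : p = (4 * (p %/ 4)).+1%N by rewrite {1}(divn_eq p 4) p1; lia.
have p5 : (5 <= p)%N.
  have := prime_gt1 pp; rewrite hp => h.
  case E: (p %/ 4)%N => [|k]; last by lia.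
  by move: pp; rewrite hp E.
set m := (p %/ 4)%N.
set P : {poly 'F_p} := 'X^(2 * m) - 1.
have P0 : P != 0.
  by rewrite -size_poly_eq0 /P size_XnsubC //; lia.
have sP : size P = (2 * m).+1 by rewrite /P size_XnsubC //; lia.
set rs := enum (predC1 (0 : 'F_p)).
have srs : size rs = p.-1 by rewrite -cardE cardC1 card_Fp.
have : ~~ all (root P) rs.
  apply/negP => hall.
  have := max_poly_roots P0 hall (enum_uniq _).
  rewrite sP srs; lia.
case/allPn => x; rewrite mem_enum /= => x0 hx.
have xp : x ^+ (4 * m).+1 = x by rewrite -hp -[X in _ = X](expf_card x) card_Fp.
have x4 : x ^+ (4 * m) = 1.
  by apply: (mulfI x0); rewrite -exprS xp mulr1.
set z := x ^+ (2 * m).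
have z1 : z != 1 by move: hx; rewrite /root /P !hornerE; apply: contra => /eqP e; rewrite /z in e; rewrite e subrr.
have z2 : z ^+ 2 = 1 by rewrite /z -exprM; have -> : (2 * m * 2 = 4 * m)%N by lia.
have zm1 : z = -1.
  have : (z - 1) * (z + 1) = 0 by rewrite mulrDr mulrBl mulr1 mul1r -expr2 z2; ring.
  move/eqP; rewrite mulf_eq0 subr_eq0 (negPf z1) /= addr_eq0 => /eqP //.
exists (x ^+ m); by rewrite -exprM mulnC.
Qed.

Definition dist (a b : nat) : nat := if (a <= b)%N then (b - a)%N else (a - b)%N.

Lemma dist_sqr (R : pzRingType) (a b : nat) : ((dist a b)%:R : R) ^+ 2 = (a%:R - b%:R) ^+ 2.
Proof.
rewrite /dist; case: leqP => h; first by rewrite natrB // -sqrrN opprB.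
by rewrite natrB // ltnW.
Qed.

Lemma fermat2 p : prime p -> (p %% 4 = 1)%N -> s2 p.
Proof.
move=> pp p1.
have [W W2] := @sqrtm1 p pp p1.
have [s /andP [hs1 hs2]] := sqrt_ex p.
have hs1' : (s ^ 2 < p)%N.
  rewrite ltn_neqAle hs1 andbT; apply/negP => /eqP e.
  move: pp; rewrite -e; case: s {hs1 hs2 W W2 e} => [|[|s]] //.
  by rewrite expnS expn1 => /primeP [_ /(_ s.+2)]; rewrite dvdn_mulr // => /(_ isT); case/orP => /eqP; lia.
pose g (ij : 'I_s.+1 * 'I_s.+1) : 'F_p := (ij.1 : nat)%:R - W * (ij.2 : nat)%:R.
case: (boolP (injectiveb g)) => [/injectiveP ig | /injectivePn [[i j] [[i' j'] ne eg]]].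
  have := leq_card g ig; rewrite card_prod card_Fp // !card_ord.
  move: hs2; rewrite expnS expn1; lia.
rewrite /g /= in eg.
have e1 : ((i : nat)%:R - (i' : nat)%:R : 'F_p) = W * ((j : nat)%:R - (j' : nat)%:R).
  apply/eqP; rewrite -subr_eq0.
  have -> : ((i : nat)%:R - (i' : nat)%:R - W * ((j : nat)%:R - (j' : nat)%:R) : 'F_p) = ((i : nat)%:R - W * (j : nat)%:R) - ((i' : nat)%:R - W * (j' : nat)%:R) by ring.
  by rewrite eg subrr.
set dX := dist i i'; set dY := dist j j'.
have hN : (p %| dX ^ 2 + dY ^ 2)%N.
  rewrite (dvdn_pcharf (pchar_Fp pp)) natrD !natrX dist_sqr dist_sqr e1 exprMn W2.
  by rewrite mulN1r addNr.
have bX : (dX <= s)%N by rewrite /dX /dist; case: (leqP (i:nat) i'); have := ltn_ord i; have := ltn_ord i'; lia.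
have bY : (dY <= s)%N by rewrite /dY /dist; case: (leqP (j:nat) j'); have := ltn_ord j; have := ltn_ord j'; lia.
have pos : (0 < dX ^ 2 + dY ^ 2)%N.
  case: (eqVneq (i : nat) i') => ei.
    have ej : (j : nat) != j'.
      apply: contra ne => /eqP ej; apply/eqP; congr pair; exact: val_inj.
    have : (0 < dY)%N by rewrite /dY /dist; case: (leqP (j:nat) j'); move: ej; lia.
    move=> h; have : (0 < dY ^ 2)%N by rewrite expn_gt0 h.
    lia.
  have : (0 < dX)%N by rewrite /dX /dist; case: (leqP (i:nat) i'); move: ei; lia.
  move=> h; have : (0 < dX ^ 2)%N by rewrite expn_gt0 h.
  lia.
have bX2 : (dX ^ 2 <= s ^ 2)%N by rewrite leq_exp2r.
have bY2 : (dY ^ 2 <= s ^ 2)%N by rewrite leq_exp2r.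
exists dX, dY.
move: hN => /dvdnP [k ek].
case: k ek => [|[|k]] ek.
- by move: pos; rewrite ek.
- by rewrite ek mul1n.
- have : (2 * p <= dX ^ 2 + dY ^ 2)%N by rewrite ek !mulSn; lia.
  lia.
Qed.

End R.

Lemma lognMq q k m : 0 < k -> 0 < m -> logn q (k * m) = logn q k + logn q m.
Proof. exact: lognM. Qed.

Lemma s2_even q n : prime q -> q %% 4 = 3 -> 0 < n -> s2 n -> ~~ odd (logn q n).
Proof.
move=> pq q3; elim/ltn_ind: n => n IH n0 [U [V e]].
case: (boolP (q %| n)) => qn; last first.
  by rewrite lognE (negPf qn) !andbF.
have qU : q %| U by apply: (@key3 q U V) => //; rewrite -e.
have qV : q %| V by apply: (@key3 q V U) => //; rewrite addnC -e.
move: qU qV => /dvdnP [U' eU] /dvdnP [V' eV].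
have q1 := prime_gt1 pq.
have em : n = q ^ 2 * (U' ^ 2 + V' ^ 2) by rewrite e eU eV; ring.
have q2 : 1 < q ^ 2 by rewrite (leq_trans q1) // -{1}(expn1 q) leq_exp2l.
have m0 : 0 < U' ^ 2 + V' ^ 2 by move: n0; rewrite em muln_gt0 => /andP[].
rewrite em lognM ?expn_gt0 ?(ltnW q1) // pfactorK // addnC oddD /=.
rewrite addbF; apply: IH => //; last by exists U', V'.
by rewrite em; apply: ltn_Pmull.
Qed.

Lemma even_s2 n : 0 < n -> (forall q, prime q -> q %% 4 = 3 -> ~~ odd (logn q n)) -> s2 n.
Proof.
elim/ltn_ind: n => n IH n0 H.
case: (ltnP 1 n) => n1; last first.
  have -> : n = 1 by lia.
  by exists 1, 0.
have pp := pdiv_prime n1; set p := pdiv n in pp.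
have p1 := prime_gt1 pp.
move: (pdiv_dvd n) => /dvdnP [m em]; rewrite -/p in em; clearbody p.
have m0 : 0 < m by move: n0; rewrite em muln_gt0 => /andP[].
have mn : m < n by rewrite em ltn_Pmulr.
have lq : forall q, prime q -> q != p -> logn q n = logn q m.
  move=> q pq qp; rewrite em lognM ?(ltnW p1) // (logn_prime _ pp).
  by rewrite (negPf qp) addn0.
have p4 : p %% 4 < 4 by apply: ltn_pmod.
case: (even_prime pp) => [p2|podd].
  rewrite em; apply: s2M; first by apply: IH => // q pq q3; rewrite -lq //; [exact: H | apply/eqP; lia].
  by rewrite p2; exists 1, 1.
have hp : p %% 4 = 1 \/ p %% 4 = 3.
  move: podd p4; rewrite {1}(divn_eq p 4) oddD oddM andbF /=.
  case: (p %% 4) => [|[|[|[|k]]]] //= *; by [left|right].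
case: hp => [p1m|p3].
  rewrite em; apply: s2M; last by exact: fermat2.
  by apply: IH => // q pq q3; rewrite -lq //; [exact: H | apply/eqP; lia].
have hl := H p pp p3.
rewrite em lognM ?(ltnW p1) // (logn_prime _ pp) eqxx /= in hl.
have : 0 < logn p m by move: hl; case: (logn p m).
rewrite logn_gt0 mem_primes => /and3P [_ _ /dvdnP [m' em']].
have m'0 : 0 < m' by move: m0; rewrite em' muln_gt0 => /andP[].
have lq2 : forall q, prime q -> logn q n = logn q m' + (q == p) * 2.
  move=> q pq.
  rewrite em em' !lognM ?muln_gt0 ?m'0 ?(ltnW p1) // (logn_prime _ pp).
  by case: (q == p) => /=; lia.
have -> : n = m' * p ^ 2 by rewrite em em'; ring.
apply: s2M; last by exists p, 0; ring.
apply: IH => //.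
  rewrite em em' -mulnA; apply: ltn_Pmulr => //.
  by rewrite -(muln1 1) ltn_mul.
move=> q pq q3; move: (H q pq q3); rewrite (lq2 q pq) oddD.
by case: (q == p) => /=; rewrite ?addbF.
Qed.

Local Open Scope ring_scope.

Lemma sum2sq_nat (n : nat) : sum2sq n%:Z <-> s2 n.
Proof.
split.
  move=> [u [v e]]; exists `|u|%N, `|v|%N.
  have hu : u ^+ 2 = (`|u|%N ^ 2)%N%:Z by rewrite -abszX gez0_abs // sqr_ge0.
  have hv : v ^+ 2 = (`|v|%N ^ 2)%N%:Z by rewrite -abszX gez0_abs // sqr_ge0.
  by move: e; rewrite hu hv -PoszD => -[].
move=> [U [V ->]]; exists U%:Z, V%:Z.
by rewrite PoszD !expnS !expn0 !muln1 !PoszM -!expr2.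
Qed.

Theorem mainTheorem14 (a b c : int) :
  posdef2 a b c ->
  (exists d : int, a * c - b ^+ 2 = d ^+ 2) ->
  ((sum2sq a <-> (forall x1 x2 : int, sum2sq (qform a b c x1 x2))) /\
   (sum2sq a <-> (exists x1 x2 : int, (x1, x2) != (0, 0) /\ sum2sq (qform a b c x1 x2)))) /\
  (~ sum2sq a ->
   exists q : nat, prime q /\ (q %% 4 = 3)%N /\
     forall x1 x2 : int, (x1, x2) != (0, 0) ->
       odd (logn q `|qform a b c x1 x2|%N)).
Proof.
move=> pd [d hd].
have Qa : qform a b c 1 0 = a by rewrite /qform; ring.
have a0 : 0 < a by rewrite -Qa; apply: pd.
have Q00 : qform a b c 0 0 = 0 by rewrite /qform; ring.
have iden : forall x1 x2, a * qform a b c x1 x2 = (a * x1 + b * x2) ^+ 2 + (d * x2) ^+ 2.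
  by move=> x1 x2; rewrite /qform exprMn -hd; ring.
set na := `|a|%N.
have ea : a = na%:Z by rewrite /na gez0_abs // ltW.
have na0 : (0 < na)%N by rewrite /na absz_gt0 gt_eqF.
have Qpos : forall x1 x2, (x1, x2) != (0, 0) -> (0 < `|qform a b c x1 x2|%N)%N.
  by move=> x1 x2 nz; rewrite absz_gt0 gt_eqF // pd.
have eQ : forall x1 x2, (x1, x2) != (0, 0) -> qform a b c x1 x2 = (`|qform a b c x1 x2|%N)%:Z.
  by move=> x1 x2 nz; rewrite gez0_abs // ltW // pd.
have par : forall x1 x2, (x1, x2) != (0, 0) -> forall q, prime q -> (q %% 4 = 3)%N ->
    odd (logn q na) = odd (logn q `|qform a b c x1 x2|%N).
  move=> x1 x2 nz q pq q3.
  have s : s2 (na * `|qform a b c x1 x2|%N).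
    apply/sum2sq_nat; rewrite PoszM -ea -eQ // iden.
    by exists (a * x1 + b * x2), (d * x2).
  have mpos : (0 < na * `|qform a b c x1 x2|%N)%N by rewrite muln_gt0 na0 Qpos.
  have := @s2_even q _ pq q3 mpos s.
  rewrite lognM // ?Qpos // oddD.
  by case: (odd _); case: (odd _).
have part2 : ~ sum2sq a -> exists q : nat, prime q /\ (q %% 4 = 3)%N /\
     forall x1 x2 : int, (x1, x2) != (0, 0) -> odd (logn q `|qform a b c x1 x2|%N).
  move=> ns.
  have [q [pq [q3 oq]]] : exists q, prime q /\ (q %% 4 = 3)%N /\ odd (logn q na).
    apply: NNPP => hn; apply: ns; rewrite ea; apply/sum2sq_nat; apply: even_s2 => // q pq q3.
    by apply/negP => oq; apply: hn; exists q.
  exists q; split => //; split => // x1 x2 nz.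
  by rewrite -(par _ _ nz q pq q3).
have nz10 : ((1 : int), (0 : int)) != (0, 0) by [].
split => //.
have sa_all : sum2sq a -> forall x1 x2, sum2sq (qform a b c x1 x2).
  move=> sa x1 x2.
  case: (eqVneq (x1, x2) (0, 0)) => [[-> ->]|nz]; first by rewrite Q00; exists 0, 0; ring.
  rewrite (eQ _ _ nz); apply/sum2sq_nat; apply: even_s2; first exact: Qpos.
  move=> q pq q3; rewrite -(par _ _ nz q pq q3).
  by apply: s2_even => //; apply/sum2sq_nat; rewrite -ea.
split; split.
- exact: sa_all.
- by move=> h; rewrite -Qa; apply: h.
- by move=> sa; exists 1, 0; split => //; apply: sa_all.
- move=> [x1 [x2 [nz sQ]]]; apply: NNPP => ns.
  have [q [pq [q3 oq]]] := part2 ns.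
  have := oq x1 x2 nz; apply/negP.
  apply: s2_even => //; first exact: Qpos.
  by apply/sum2sq_nat; rewrite -eQ.
Qed.
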